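(* Let $\mathcal{R},\mathcal{V},\mathcal{R}',\mathcal{V}'$ be finite sets with $|\mathcal{R}|=|\mathcal{R}'|$. For any positive integer $k$ and any deterministic privacy mechanism $\Delta=(\mathcal{R},\mathcal{V},\mathcal{R}',\mathcal{V}',\Pi,\Delta)$: $\Delta$ is a $k$-anonymization if and only if $\Delta$ is a $Pk$-anonymization.
   Context: A table on $(\mathcal{R},\mathcal{V})$ is a map $\mathcal{R}\to\mathcal{V}$; $\mathcal{T}$, $\mathcal{T}'$ denote the sets of tables on $(\mathcal{R},\mathcal{V})$ and $(\mathcal{R}',\mathcal{V}')$. For sets $X,Y$, $X\to Y$ is the set of maps $X\to Y$. A privacy mechanism is $(\mathcal{R},\mathcal{V},\mathcal{R}',\mathcal{V}',\Pi,\Delta)$ with $\Pi$ uniformly distributed over bijections $\mathcal{R}\to\mathcal{R}'$ and $\Delta$ a random variable in $\mathcal{T}\to(\mathcal{R}\to\mathcal{V}')$; it is a privacy mechanism from $T$ to $T'$ (random variables on $\mathcal{T},\mathcal{T}'$) if $T,\Pi,\Delta$ are mutually independent and $\Delta(T)=T'\circ\Pi$. It is deterministic if for each $\tau\in\mathcal{T}$ there is a unique table $\hat\tau$ with $\Delta(\tau)=\hat\tau$ (with probability one). $\tau'$ is $k$-anonymous if for every $r'\in\mathcal{R}'$ there are at least $k$ elements $\hat r'\in\mathcal{R}'$ with $\tau'(\hat r')=\tau'(r')$. $(\Delta,\tau')$ is $Pk$-anonymous if for all random variables $T,T'$ such that $\Delta$ is a privacy mechanism from $T$ to $T'$ and all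 $r\in\mathcal{R}$, $r'\in\mathcal{R}'$, $\Pr[\Pi(r)=r'\mid T'=\tau']\le1/k$. Call $\tau'\in\mathcal{T}'$ attainable if some $\tau\in\mathcal{T}$ has $\Pr[\Delta(\tau)=\tau'\circ\Pi]\neq0$. $\Delta$ is a $Pk$-anonymization if $(\Delta,\tau')$ is $Pk$-anonymous for every attainable $\tau'$, and a $k$-anonymization if every attainable $\tau'$ is $k$-anonymous. *)

(* Defs.v *)
From HB Require Import structures.
From mathcomp Require Import all_boot all_order all_algebra.
From mathcomp Require Import all_classical all_reals all_analysis.
Set Implicit Arguments. Unset Strict Implicit. Unset Printing Implicit Defensive.
Import Order.TTheory GRing.Theory Num.Theory.
Local Open Scope classical_set_scope.
Local Open Scope ring_scope.

Section PrivacyDefs.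
Context {R : realType} {d : measure_display} {Omega : measurableType d}
        (P : probability Omega R).

Definition pr (A : set Omega) : R := fine (P A).

(* conditional probability Pr[A | B]; by MathComp's x / 0 = 0 convention it
   is 0 when Pr[B] = 0 *)
Definition condpr (A B : set Omega) : R := pr (A `&` B) / pr B.

Definition finrv (A : finType) (X : Omega -> A) :=
  forall a : A, measurable (X @^-1` [set a]).

Definition mutually_independent3 (A B C : finType)
    (X : Omega -> A) (Y : Omega -> B) (Z : Omega -> C) :=
  forall (SA : {set A}) (SB : {set B}) (SC : {set C}),
    P ([set w | X w \in SA] `&` [set w | Y w \in SB] `&` [set w | Z w \in SC])
    = (P [set w | X w \in SA] * P [set w | Y w \in SB]
       * P [set w | Z w \in SC])%E.

Variables (Rr Vv Rr' Vv' : finType).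

(* tables on (Rr,Vv) are {ffun Rr -> Vv}; tables on (Rr',Vv') are {ffun Rr' -> Vv'} *)

Definition bijections : {set {ffun Rr -> Rr'}} :=
  [set f : {ffun Rr -> Rr'} | injectiveb f && [forall y, exists x, f x == y]].

Variables (Pi : Omega -> {ffun Rr -> Rr'})
          (Delta : Omega -> {ffun {ffun Rr -> Vv} -> {ffun Rr -> Vv'}}).

Definition privacy_mechanism :=
  [/\ finrv Pi, finrv Delta &
      forall f : {ffun Rr -> Rr'},
        P [set w | Pi w = f] =
        (if f \in bijections then (#|bijections|%:R^-1)%:E else 0)%E].

Definition mechanism_from (T : Omega -> {ffun Rr -> Vv})
    (T' : Omega -> {ffun Rr' -> Vv'}) :=
  [/\ finrv T, finrv T', mutually_independent3 T Pi Delta &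
      P [set w | Delta w (T w) <> [ffun r => T' w (Pi w r)]] = 0%E].

Definition deterministic :=
  forall tau : {ffun Rr -> Vv},
    exists! tauhat : {ffun Rr -> Vv'}, P [set w | Delta w tau = tauhat] = 1%E.

Definition k_anonymous (k : nat) (tau' : {ffun Rr' -> Vv'}) :=
  forall r' : Rr', (k <= #|[set r'' | tau' r'' == tau' r']|)%N.

Definition Pk_anonymous (k : nat) (tau' : {ffun Rr' -> Vv'}) :=
  forall (T : Omega -> {ffun Rr -> Vv}) (T' : Omega -> {ffun Rr' -> Vv'}),
    mechanism_from T T' ->
    forall (r : Rr) (r' : Rr'),
      condpr [set w | Pi w r = r'] [set w | T' w = tau'] <= (k%:R)^-1.

Definition attainable (tau' : {ffun Rr' -> Vv'}) :=
  exists tau : {ffun Rr -> Vv},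
    P [set w | Delta w tau = [ffun r => tau' (Pi w r)]] <> 0%E.

Definition k_anonymization (k : nat) :=
  forall tau', attainable tau' -> k_anonymous k tau'.

Definition Pk_anonymization (k : nat) :=
  forall tau', attainable tau' -> Pk_anonymous k tau'.

End PrivacyDefs.

(* Main.v *)
Require Import Defs.
From HB Require Import structures.
From mathcomp Require Import all_boot all_order all_algebra.
From mathcomp Require Import all_classical all_reals all_analysis.
From mathcomp Require Import ring lra fingroup perm.
Set Implicit Arguments. Unset Strict Implicit. Unset Printing Implicit Defensive.
Import Order.TTheory GRing.Theory Num.Theory.
Local Open Scope classical_set_scope.
Local Open Scope ring_scope.

Section Gen.
Context {R : realType} {d : measure_display} {Omega : measurableType d}
        (P : probability Omega R).

Lemma set_ext (E1 E2 : set Omega) : (forall w, E1 w <-> E2 w) -> E1 = E2.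
Proof. by move=> h; apply/funext => w; apply/propext. Qed.

Lemma pr_ext E1 E2 : (forall w, E1 w <-> E2 w) -> pr P E1 = pr P E2.
Proof. by move=> /set_ext ->. Qed.

Lemma pr_ge0 E : 0 <= pr P E.
Proof. exact/fine_ge0/measure_ge0. Qed.

Lemma prE E : measurable E -> P E = (pr P E)%:E.
Proof. by move=> mE; rewrite /pr fineK // fin_num_measure. Qed.

Lemma pr_setT : pr P setT = 1.
Proof. by rewrite /pr probability_setT. Qed.

Lemma pr_set0 : pr P set0 = 0.
Proof. by rewrite /pr measure0. Qed.

Section RV.
Variables (A : finType) (X : Omega -> A) (hX : finrv X).

Lemma meas_seq (s : seq A) : measurable [set w | X w \in s].
Proof.
elim: s => [|a s IH].
  by rewrite (@set_ext [set w | X w \in [::]] set0) // => w; rewrite in_nil.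
rewrite (@set_ext [set w | X w \in a :: s] (X @^-1` [set a] `|` [set w | X w \in s])).
  exact: measurableU.
move=> w; rewrite /= in_cons; split.
  by case/orP => [/eqP ->|h]; [left|right].
by case=> [->|h]; [rewrite eqxx | rewrite h orbT].
Qed.

Lemma finrv_meas (Q : pred A) : measurable [set w | Q (X w)].
Proof.
rewrite (@set_ext [set w | Q (X w)] [set w | X w \in [seq x <- index_enum A | Q x]]); first exact: meas_seq.
by move=> w; rewrite /= mem_filter mem_index_enum andbT.
Qed.

Lemma pr_seq s : uniq s ->
  pr P [set w | X w \in s] = \sum_(x <- s) pr P [set w | X w = x].
Proof.
elim: s => [|a s IH] /=.
  by move=> _; rewrite big_nil (@pr_ext [set w | X w \in [::]] set0) ?pr_set0 // => w; rewrite in_nil.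
case/andP => anot us; rewrite big_cons -IH //.
rewrite (@pr_ext [set w | X w \in a :: s] ([set w | X w = a] `|` [set w | X w \in s])); last first.
  move=> w; rewrite /= in_cons; split; first by case/orP => [/eqP ->|h]; [left|right].
  by case=> [->|h]; [rewrite eqxx | rewrite h orbT].
have mA : measurable [set w | X w = a] := hX a.
have mB := meas_seq s.
have dis : [set w | X w = a] `&` [set w | X w \in s] = set0.
  apply/set_ext => w; split => //=; case=> -> h.
  by rewrite h in anot.
by rewrite /pr measureU // fineD // fin_num_measure.
Qed.

Lemma pr_sum (Q : pred A) (E : set Omega) : (forall w, E w <-> Q (X w)) ->
  pr P E = \sum_(x | Q x) pr P [set w | X w = x].
Proof.
move=> hE; rewrite (pr_ext hE) (@pr_ext [set w | Q (X w)] [set w | X w \in [seq x <- index_enum A | Q x]]).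
  by rewrite pr_seq ?filter_uniq ?index_enum_uniq // big_filter.
by move=> w; rewrite /= mem_filter mem_index_enum andbT.
Qed.

Lemma pr_le (Q : pred A) x : Q x ->
  pr P [set w | X w = x] <= pr P [set w | Q (X w)].
Proof.
move=> Qx; rewrite (@pr_sum Q [set w | Q (X w)]) // (bigD1 x) //= lerDl.
by apply: sumr_ge0 => *; exact: pr_ge0.
Qed.

Lemma pr_zero (Q : pred A) x E : Q x -> (forall w, E w <-> Q (X w)) ->
  pr P E = 0 -> pr P [set w | X w = x] = 0.
Proof.
move=> Qx hE hE0; apply/le_anti/andP; split; last exact: pr_ge0.
by rewrite -hE0 (pr_ext hE); exact: pr_le.
Qed.

Lemma pr_split (Q : pred A) :
  pr P [set w | Q (X w)] + pr P [set w | ~~ Q (X w)] = 1.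
Proof.
rewrite -pr_setT (@pr_sum predT setT) // (bigID Q) /=.
by rewrite -(@pr_sum Q [set w | Q (X w)]) // -(@pr_sum (fun x => ~~ Q x) [set w | ~~ Q (X w)]).
Qed.

Lemma pr_aseq (good Q1 Q2 : pred A) :
  (forall x, ~~ good x -> pr P [set w | X w = x] = 0) ->
  (forall x, good x -> Q1 x = Q2 x) ->
  pr P [set w | Q1 (X w)] = pr P [set w | Q2 (X w)].
Proof.
move=> h0 h; rewrite (@pr_sum Q1 [set w | Q1 (X w)]) // (@pr_sum Q2 [set w | Q2 (X w)]) //.
rewrite (bigID good) [in RHS](bigID good) /=.
rewrite [Y in _ + Y = _]big1 ?[Y in _ = _ + Y]big1 ?addr0; last 2 first.
- by move=> x /andP[_ /h0].
- by move=> x /andP[_ /h0].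
by apply: eq_bigl => x; case g: (good x); rewrite ?andbT ?andbF // h.
Qed.

End RV.

Lemma finrv_pair (A B : finType) (X : Omega -> A) (Y : Omega -> B) :
  finrv X -> finrv Y -> finrv (fun w => (X w, Y w)).
Proof.
move=> hX hY [a b].
rewrite (@set_ext ((fun w => (X w, Y w)) @^-1` [set (a, b)]) (X @^-1` [set a] `&` Y @^-1` [set b])); first exact: measurableI.
by move=> w /=; split => [[-> ->]|[-> ->]].
Qed.

Lemma finrv_comp (A B : finType) (X : Omega -> A) (f : A -> B) :
  finrv X -> finrv (fun w => f (X w)).
Proof.
move=> hX b; rewrite (@set_ext ((fun w => f (X w)) @^-1` [set b]) [set w | (fun x => f x == b) (X w)]).
  exact: (@finrv_meas _ X hX (fun x => f x == b)).
by move=> w /=; split => [->|/eqP].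
Qed.

End Gen.


Section Comb.
Local Close Scope classical_set_scope.
Variables (Rr Rr' Vv' : finType).

Definition Bs (th : {ffun Rr -> Vv'}) (tau' : {ffun Rr' -> Vv'}) :=
  [set f in bijections Rr Rr' | th == [ffun z => tau' (f z)]].
Definition Fs (th : {ffun Rr -> Vv'}) (tau' : {ffun Rr' -> Vv'}) r c :=
  [set f in bijections Rr Rr' | (f r == c) && (th == [ffun z => tau' (f z)])].
Definition Cls (tau' : {ffun Rr' -> Vv'}) r' := [set c | tau' c == tau' r'].

Variables (th : {ffun Rr -> Vv'}) (tau' : {ffun Rr' -> Vv'}) (r : Rr).

Definition sw (a b : Rr') (f : {ffun Rr -> Rr'}) : {ffun Rr -> Rr'} :=
  [ffun x => tperm a b (f x)].

Lemma sw_inj a b : injective (sw a b).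
Proof.
move=> f g e; apply/ffunP => x; have := congr1 (fun F : {ffun Rr -> Rr'} => F x) e.
by rewrite !ffunE; exact: perm_inj.
Qed.

Lemma sw_F a b f : tau' a = tau' b -> f \in Fs th tau' r a -> sw a b f \in Fs th tau' r b.
Proof.
move=> tab; rewrite !inE => /andP[/andP[inj surj] /andP[/eqP fa /eqP e]].
apply/andP; split; first (apply/andP; split).
- apply/injectiveP => x y; rewrite !ffunE => /perm_inj; exact: (injectiveP _ inj).
- apply/forallP => y; have/existsP [x /eqP hx] := (forallP surj) (tperm a b y).
  by apply/existsP; exists x; rewrite ffunE hx tpermK.
apply/andP; split; first by rewrite ffunE fa tpermL.
rewrite e; apply/eqP/ffunP => z; rewrite !ffunE.
by case: tpermP => [->|->|] //; rewrite tab.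
Qed.

Lemma card_Fs a b : tau' a = tau' b -> (#|Fs th tau' r a| <= #|Fs th tau' r b|)%N.
Proof.
move=> tab; rewrite -(card_imset _ (@sw_inj a b)).
apply: subset_leq_card; apply/fintype.subsetP => g /imsetP [f hf ->]; exact: sw_F.
Qed.

Lemma card_A r' :
  #|[set f in Bs th tau' | tau' (f r) == tau' r']| = (#|Cls tau' r'| * #|Fs th tau' r r'|)%N.
Proof.
rewrite -sum1_card (partition_big (fun f : {ffun Rr -> Rr'} => f r) (fun c => c \in Cls tau' r')) /=; last first.
  by move=> f; rewrite /Cls !inE => /andP[_].
rewrite -sum_nat_const; apply: eq_bigr => c hc.
rewrite sum1dep_card.
have tc : tau' c = tau' r' by apply/eqP; move: hc; rewrite /Cls inE.
have -> : #|[set x | (x \in [set f in Bs th tau' | tau' (f r) == tau' r']) && (x r == c)]|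
    = #|Fs th tau' r c|.
  apply: eq_card => f; rewrite /Bs /Fs !inE.
  case fc: (f r == c); last by rewrite !andbF.
  by move/eqP: fc => ->; rewrite tc eqxx !andbT.
by apply/eqP; rewrite eqn_leq (card_Fs tc) (card_Fs (esym tc)).
Qed.

Lemma count_fwd r' k : (k <= #|Cls tau' r'|)%N ->
  (k * #|Fs th tau' r r'| <= #|Bs th tau'|)%N.
Proof.
move=> hk; apply: (@leq_trans (#|Cls tau' r'| * #|Fs th tau' r r'|)).
  by rewrite leq_mul2r hk orbT.
rewrite -card_A; apply: subset_leq_card; apply/fintype.subsetP => f.
by rewrite inE => /andP[].
Qed.

Lemma count_conv r' f0 : f0 \in Bs th tau' -> f0 r = r' ->
  #|Bs th tau'| = (#|Cls tau' r'| * #|Fs th tau' r r'|)%N /\ (0 < #|Fs th tau' r r'|)%N.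
Proof.
move=> hf0 f0r; split; last first.
  apply/card_gt0P; exists f0; move: hf0; rewrite /Bs /Fs !inE f0r eqxx.
  by case/andP => -> ->.
rewrite -card_A; apply: eq_card => f; rewrite inE.
case hf: (f \in Bs th tau') => //=.
move: hf hf0; rewrite /Bs !inE => /andP[_ /eqP e] /andP[_ /eqP e0].
have := congr1 (fun F : {ffun Rr -> Vv'} => F r) e; rewrite ffunE => <-.
have := congr1 (fun F : {ffun Rr -> Vv'} => F r) e0; rewrite ffunE f0r => <-.
by rewrite eqxx.
Qed.

End Comb.


Section Mech.
Context {R : realType} {d : measure_display} {Omega : measurableType d}
        (P : probability Omega R).
Variables (Rr Vv Rr' Vv' : finType) (Pi : Omega -> {ffun Rr -> Rr'})
  (Delta : Omega -> {ffun {ffun Rr -> Vv} -> {ffun Rr -> Vv'}})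
  (h : {ffun Rr -> Vv} -> {ffun Rr -> Vv'}).
Hypothesis HPM : privacy_mechanism P Pi Delta.
Hypothesis Hh : forall tau, P [set w | Delta w tau = h tau] = 1%E.

Let Nb := (#|bijections Rr Rr'|%:R : R).

Lemma hPi : finrv Pi. Proof. by case: HPM. Qed.
Lemma hD : finrv Delta. Proof. by case: HPM. Qed.

Lemma pi_prob f : pr P [set w | Pi w = f] = if f \in bijections Rr Rr' then Nb^-1 else 0.
Proof. by rewrite /pr; case: HPM => _ _ /(_ f) ->; case: ifP. Qed.

Lemma delta_null tau : pr P [set w | Delta w tau != h tau] = 0.
Proof.
have := pr_split P hD (fun D => D tau == h tau).
have e1 : pr P [set w | Delta w tau = h tau] = 1 by rewrite /pr Hh.
rewrite (@pr_ext _ _ _ P [set w | Delta w tau == h tau] [set w | Delta w tau = h tau]) ?e1;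
  last by move=> w; split => /eqP.
move=> H; lra.
Qed.

Section From.
Variables (T : Omega -> {ffun Rr -> Vv}) (T' : Omega -> {ffun Rr' -> Vv'}).
Hypothesis Hmf : mechanism_from P Pi Delta T T'.

Let XT := ({ffun Rr -> Vv} * {ffun Rr -> Rr'} * {ffun {ffun Rr -> Vv} -> {ffun Rr -> Vv'}}
   * {ffun Rr' -> Vv'})%type.
Let X (w : Omega) : XT := (T w, Pi w, Delta w, T' w).

Lemma hT : finrv T. Proof. by case: Hmf. Qed.
Lemma hT' : finrv T'. Proof. by case: Hmf. Qed.
Lemma hX : finrv X.
Proof. exact: (finrv_pair (finrv_pair (finrv_pair hT hPi) hD) hT'). Qed.

Definition good (x : XT) := [&& x.1.1.2 \in bijections Rr Rr', x.1.2 x.1.1.1 == h x.1.1.1 &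
   x.1.2 x.1.1.1 == [ffun r => x.2 (x.1.1.2 r)]].

Lemma bad0 x : ~~ good x -> pr P [set w | X w = x] = 0.
Proof.
rewrite /good; case: (boolP (x.1.1.2 \in bijections Rr Rr')) => hb /=; last first.
  move=> _; apply: (pr_zero hX (Q := fun y => y.1.1.2 == x.1.1.2) (E := [set w | Pi w = x.1.1.2])) => //.
  - by move=> w; split => /eqP.
  - by rewrite pi_prob (negbTE hb).
case: (boolP (x.1.2 x.1.1.1 == h x.1.1.1)) => hd /=; last first.
  move=> _; apply: (pr_zero hX (Q := fun y => y.1.2 x.1.1.1 != h x.1.1.1)
     (E := [set w | Delta w x.1.1.1 != h x.1.1.1])) => //.
  exact: delta_null.
move=> hm; apply: (pr_zero hX (Q := fun y => y.1.2 y.1.1.1 != [ffun r => y.2 (y.1.1.2 r)])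
   (E := [set w | Delta w (T w) <> [ffun r => T' w (Pi w r)]])) => //.
- by move=> w /=; split => H; apply/eqP.
- by rewrite /pr; case: Hmf => _ _ _ ->.
Qed.

Lemma indepTP tau f : pr P [set w | (T w, Pi w) = (tau, f)] =
  pr P [set w | T w = tau] * pr P [set w | Pi w = f].
Proof.
case: Hmf => _ _ /(_ [set tau]%SET [set f]%SET [set: {ffun {ffun Rr -> Vv} -> {ffun Rr -> Vv'}}]%SET) H _.
have e1 : [set w | T w \in [set tau]%SET] = [set w | T w = tau].
  by apply/set_ext => w /=; rewrite inE; split => /eqP.
have e2 : [set w | Pi w \in [set f]%SET] = [set w | Pi w = f].
  by apply/set_ext => w /=; rewrite inE; split => /eqP.
have e3 : [set w | Delta w \in [set: {ffun {ffun Rr -> Vv} -> {ffun Rr -> Vv'}}]%SET] = setT.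
  by apply/set_ext => w /=; rewrite inE.
rewrite e1 e2 e3 setIT probability_setT mule1 in H.
rewrite (@pr_ext _ _ _ P _ ([set w | T w = tau] `&` [set w | Pi w = f])); last first.
  by move=> w /=; split => [[-> ->]|[-> ->]].
rewrite /pr H fineM // fin_num_measure //; [exact: hT | exact: hPi].
Qed.

Lemma formula (Q : pred XT) (S : {ffun Rr -> Vv} -> {ffun Rr -> Rr'} -> bool) (E : set Omega) :
  (forall w, E w <-> Q (X w)) -> (forall x, good x -> Q x = S x.1.1.1 x.1.1.2) ->
  pr P E = \sum_tau pr P [set w | T w = tau] *
     (#|[set f in bijections Rr Rr' | S tau f]|%:R / Nb).
Proof.
move=> hE hQ.
rewrite (@pr_ext _ _ _ P _ _ hE) (pr_aseq hX bad0 hQ).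
rewrite (@pr_sum _ _ _ P _ _ (finrv_pair hT hPi) (fun y => S y.1 y.2)); last by [].
rewrite (_ : \sum_(y | S y.1 y.2) pr P [set w | (T w, Pi w) = y] =
   \sum_tau \sum_(f | S tau f) pr P [set w | (T w, Pi w) = (tau, f)]); last first.
  by rewrite pair_big_dep; apply: eq_bigr => -[a b].
apply: eq_bigr => tau _.
under eq_bigr => f _ do rewrite indepTP pi_prob.
rewrite -mulr_sumr -big_mkcondr /= sumr_const; congr (_ * _).
by rewrite mulr_natl; congr (_ *+ _); apply: eq_card => f; rewrite inE andbC.
Qed.

Lemma good_T' x tau' : good x ->
  (x.2 == tau') = (h x.1.1.1 == [ffun z => tau' (x.1.1.2 z)]).
Proof.
case/and3P => hb /eqP e1 /eqP e2; rewrite -e1 e2.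
apply/eqP/eqP => [->//|e]; apply/ffunP => y.
move: hb; rewrite inE => /andP[_ /forallP /(_ y) /existsP [z /eqP <-]].
by have := congr1 (fun g : {ffun Rr -> Vv'} => g z) e; rewrite !ffunE.
Qed.

End From.
End Mech.


Section Gen2.
Context {R : realType} {d : measure_display} {Omega : measurableType d}
        (P : probability Omega R).

Lemma indep_const (A B C : finType) (a0 : A) (Y : Omega -> B) (Z : Omega -> C) (c0 : C) :
  finrv Y -> finrv Z -> pr P [set w | Z w = c0] = 1 ->
  mutually_independent3 P (fun _ : Omega => a0) Y Z.
Proof.
move=> hY hZ hc SA SB SC.
have hV := finrv_pair hY hZ.
have zc : pr P [set w | Z w != c0] = 0.
  have := pr_split P hZ (fun c => c == c0).
  rewrite (@pr_ext _ _ _ P [set w | Z w == c0] [set w | Z w = c0]) ?hc;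
    last by move=> w; split => /eqP.
  move=> H; lra.
have bZ : forall c, ~~ (c == c0) -> pr P [set w | Z w = c] = 0.
  by move=> c hc'; exact: (pr_zero hZ (Q := fun c => c != c0) (E := [set w | Z w != c0])).
have bV : forall v : B * C, ~~ (v.2 == c0) -> pr P [set w | (Y w, Z w) = v] = 0.
  by move=> v hv; exact: (pr_zero hV (Q := fun v : B * C => v.2 != c0) (E := [set w | Z w != c0])).
have eC : pr P [set w | Z w \in SC] = if c0 \in SC then 1 else 0.
  rewrite (pr_aseq hZ (good := fun c => c == c0) (Q1 := fun c => c \in SC)
     (Q2 := fun _ => c0 \in SC) bZ); last by move=> c /eqP ->.
  case: (c0 \in SC); [rewrite -(pr_setT P) | rewrite -(pr_set0 P)]; exact: pr_ext.
have eBC : pr P ([set w | Y w \in SB] `&` [set w | Z w \in SC]) =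
    if c0 \in SC then pr P [set w | Y w \in SB] else 0.
  transitivity (pr P [set w | (Y w \in SB) && (c0 \in SC)]).
    transitivity (pr P [set w | (Y w \in SB) && (Z w \in SC)]).
      by apply: pr_ext => w /=; split => [[-> ->]|/andP[-> ->]].
    apply: (pr_aseq hV (good := fun v : B * C => v.2 == c0)
     (Q1 := fun v : B * C => (v.1 \in SB) && (v.2 \in SC))
     (Q2 := fun v : B * C => (v.1 \in SB) && (c0 \in SC)) bV).
    by move=> v /eqP ->.
  case: (c0 \in SC); last by rewrite -(pr_set0 P); apply: pr_ext => w /=; rewrite andbF.
  by apply: pr_ext => w /=; rewrite andbT.
have mB := finrv_meas hY (fun b => b \in SB).
have mC := finrv_meas hZ (fun c => c \in SC).
case hA: (a0 \in SA).
  have -> : [set w : Omega | true] = setT by apply: set_ext.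
  rewrite setTI probability_setT mul1e !prE //; last exact: measurableI.
  by rewrite eBC eC -EFinM; case: (c0 \in SC); rewrite ?mulr1 ?mulr0.
have -> : [set w : Omega | false] = set0 by apply: set_ext.
by rewrite !set0I measure0 !mul0e.
Qed.

Lemma sum_T0 (A : finType) (tau0 : A) (F : A -> R) :
  \sum_tau pr P [set w | tau0 = tau] * F tau = F tau0.
Proof.
rewrite (bigD1 tau0) //= big1 ?addr0.
  by rewrite (@pr_ext _ _ _ P _ setT) ?pr_setT ?mul1r.
move=> tau hne; rewrite (@pr_ext _ _ _ P _ set0) ?pr_set0 ?mul0r //.
by move=> w; split => // e; move: hne; rewrite e eqxx.
Qed.

End Gen2.

Lemma ratio_le (R : realType) (I : finType) (a : I -> R) (c b : I -> nat) (N : R) k :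
  (0 < k)%N -> 0 <= N -> (forall i, 0 <= a i) -> (forall i, k * c i <= b i)%N ->
  (\sum_i a i * ((c i)%:R / N)) / (\sum_i a i * ((b i)%:R / N)) <= k%:R^-1.
Proof.
move=> kpos N0 a0 hcb.
set num := \sum_i _; set den := \sum_i _.
have kR : 0 < (k%:R : R) by rewrite ltr0n.
have hnd : k%:R * num <= den.
  rewrite mulr_sumr; apply: ler_sum => i _.
  rewrite mulrCA; apply: ler_wpM2l => //.
  rewrite mulrA -natrM; apply: ler_wpM2r; first by rewrite invr_ge0.
  by rewrite ler_nat.
have den0 : 0 <= den.
  by apply: sumr_ge0 => i _; apply: mulr_ge0 => //; apply: divr_ge0.
have num0 : 0 <= num.
  by apply: sumr_ge0 => i _; apply: mulr_ge0 => //; apply: divr_ge0.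
case: (eqVneq den 0) => [->|dne]; first by rewrite invr0 mulr0 invr_ge0 ler0n.
have dpos : 0 < den by rewrite lt_def dne den0.
rewrite ler_pdivrMr // -(ler_pM2l kR) mulrA mulfV ?mul1r //.
by rewrite gt_eqF.
Qed.


Lemma cardC (Rr' Vv' : finType) (tau' : {ffun Rr' -> Vv'}) r' :
  #|[set r'' | tau' r'' == tau' r']| = #|Cls tau' r'|.
Proof.
apply: eq_card => c; rewrite /Cls finset.inE.
by apply/idP/idP => [/set_mem //|h]; exact: mem_set.
Qed.

Section Conv.
Context {R : realType} {d : measure_display} {Omega : measurableType d}
        (P : probability Omega R).
Variables (Rr Vv Rr' Vv' : finType) (Pi : Omega -> {ffun Rr -> Rr'})
  (Delta : Omega -> {ffun {ffun Rr -> Vv} -> {ffun Rr -> Vv'}})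
  (h : {ffun Rr -> Vv} -> {ffun Rr -> Vv'}).
Hypothesis HPM : privacy_mechanism P Pi Delta.
Hypothesis Hh : forall tau, P [set w | Delta w tau = h tau] = 1%E.

Lemma delta_const : pr P [set w | Delta w = [ffun tau => h tau]] = 1.
Proof.
have := pr_split P (hD HPM) (fun D => D == [ffun tau => h tau]).
have -> : pr P [set w | ~~ (Delta w == [ffun tau => h tau])] = 0.
  rewrite (pr_sum P (hD HPM) (Q := fun D => D != [ffun tau => h tau])) //.
  apply: big1 => D hne.
  have : ~~ [forall tau, D tau == h tau].
    apply: contra hne => /forallP H; apply/eqP/ffunP => tau; rewrite ffunE; exact/eqP/H.
  rewrite negb_forall => /existsP [tau htau].
  exact: (pr_zero (hD HPM) (Q := fun D => D tau != h tau)
     (E := [set w | Delta w tau != h tau]) htau (fun w => iff_refl _) (delta_null HPM Hh tau)).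
by rewrite addr0 => <-; apply: pr_ext => w; split => /eqP.
Qed.

Variables (tau0 : {ffun Rr -> Vv}) (tau' : {ffun Rr' -> Vv'}).

Definition Tp (g : {ffun Rr -> Rr'}) : {ffun Rr' -> Vv'} :=
  [ffun y => if [pick x | g x == y] is Some x then h tau0 x else tau' y].

Lemma Tp_bij g : g \in bijections Rr Rr' -> [ffun r => Tp g (g r)] = h tau0.
Proof.
move=> hg; apply/ffunP => r; rewrite !ffunE; case: pickP => [x /eqP e | none].
  by move: hg; rewrite inE => /andP[/injectiveP inj _]; rewrite (inj _ _ e).
by have := none r; rewrite eqxx.
Qed.

Lemma mech_conv : mechanism_from P Pi Delta (fun _ => tau0) (fun w => Tp (Pi w)).
Proof.
have hPi' := hPi HPM; have hD' := hD HPM.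
have hV := finrv_pair hPi' hD'.
split.
- exact: (finrv_comp (fun _ => tau0) hPi').
- exact: (finrv_comp Tp hPi').
- exact: (indep_const _ hPi' hD' delta_const).
have eS : [set w | Delta w tau0 <> [ffun r => Tp (Pi w) (Pi w r)]] =
   [set w | (fun v : {ffun Rr -> Rr'} * {ffun {ffun Rr -> Vv} -> {ffun Rr -> Vv'}} =>
       v.2 tau0 != [ffun r => Tp v.1 (v.1 r)]) (Pi w, Delta w)].
  by apply: set_ext => w /=; split => H; apply/eqP.
have H0 : pr P [set w | Delta w tau0 <> [ffun r => Tp (Pi w) (Pi w r)]] = 0.
  rewrite eS.
  transitivity (pr P [set w | (fun _ : {ffun Rr -> Rr'} * {ffun {ffun Rr -> Vv} -> {ffun Rr -> Vv'}} => false) (Pi w, Delta w)]).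
    apply: (pr_aseq hV (good := fun v => (v.1 \in bijections Rr Rr') && (v.2 tau0 == h tau0))
      (Q1 := fun v => v.2 tau0 != [ffun r => Tp v.1 (v.1 r)]) (Q2 := fun _ => false)).
      move=> v; case/nandP => hv.
        apply: (pr_zero hV (Q := fun y => y.1 == v.1) (E := [set w | Pi w = v.1])) => //.
          by move=> w; split => /eqP.
        by rewrite (pi_prob HPM) (negbTE hv).
      apply: (pr_zero hV (Q := fun y => y.2 tau0 != h tau0) (E := [set w | Delta w tau0 != h tau0])) => //.
      exact: (delta_null HPM Hh).
      by move=> v /andP[hb /eqP e]; rewrite /= e Tp_bij // eqxx.
  by rewrite -(pr_set0 P); apply: pr_ext.
by rewrite prE ?H0 // eS; exact: (finrv_meas hV (fun v : {ffun Rr -> Rr'} * {ffun {ffun Rr -> Vv} -> {ffun Rr -> Vv'}} => v.2 tau0 != [ffun r => Tp v.1 (v.1 r)])).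
Qed.

End Conv.

Unset Implicit Arguments.

Theorem corollary3 (R : realType) (d : measure_display)
    (Omega : measurableType d) (P : probability Omega R)
    (Rr Vv Rr' Vv' : finType)
    (Pi : Omega -> {ffun Rr -> Rr'})
    (Delta : Omega -> {ffun {ffun Rr -> Vv} -> {ffun Rr -> Vv'}})
    (k : nat) :
  #|Rr| = #|Rr'| -> (0 < k)%N ->
  privacy_mechanism P Pi Delta -> deterministic P Delta ->
  (k_anonymization P Pi Delta k <-> Pk_anonymization P Pi Delta k).
Proof.
move=> _ kpos HPM HD.
have : forall tau, exists th, P [set w | Delta w tau = th] = 1%E.
  by move=> tau; case: (HD tau) => th [H _]; exists th.
move=> /boolp.choice [h Hh].
split.
- move=> Hk tau' Hatt T T' Hmf r r'.
  have kan := Hk tau' Hatt r'; rewrite cardC in kan.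
  rewrite /condpr.
  rewrite (formula HPM Hh Hmf (Q := fun x => (x.1.1.2 r == r') && (x.2 == tau'))
     (S := fun tau f => (f r == r') && (h tau == [ffun z => tau' (f z)]))); last 2 first.
  + by move=> w /=; split => [[-> ->]|/andP[/eqP -> /eqP ->]]; rewrite ?eqxx.
  + by move=> x gx; rewrite (good_T' _ gx).
  rewrite (formula HPM Hh Hmf (Q := fun x => x.2 == tau')
     (S := fun tau f => h tau == [ffun z => tau' (f z)])); last 2 first.
  + by move=> w /=; split => [->|/eqP ->]; rewrite ?eqxx.
  + by move=> x gx; rewrite (good_T' _ gx).
  apply: (@ratio_le _ _ _ (fun tau => #|Fs (h tau) tau' r r'|) (fun tau => #|Bs (h tau) tau'|)) => //.
  + by move=> tau; exact: pr_ge0.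
  + by move=> tau; exact: count_fwd.
- move=> Hpk tau' [tau0 Hatt] r'.
  rewrite cardC.
  have Hmf := mech_conv HPM Hh tau0 tau'.
  have hV := finrv_pair (hPi HPM) (hD HPM).
  have eA : [set w | Delta w tau0 = [ffun r => tau' (Pi w r)]] =
     [set w | (fun v : {ffun Rr -> Rr'} * {ffun {ffun Rr -> Vv} -> {ffun Rr -> Vv'}} =>
       v.2 tau0 == [ffun r => tau' (v.1 r)]) (Pi w, Delta w)].
    by apply: set_ext => w /=; split => /eqP.
  have hB : pr P [set w | Delta w tau0 = [ffun r => tau' (Pi w r)]] =
      #|Bs (h tau0) tau'|%:R / #|bijections Rr Rr'|%:R.
    rewrite (formula HPM Hh Hmf (Q := fun x => x.1.2 x.1.1.1 == [ffun z => tau' (x.1.1.2 z)])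
       (S := fun tau f => h tau == [ffun z => tau' (f z)])).
    + exact: sum_T0.
    + by move=> w /=; split => /eqP.
    + by move=> x /and3P[_ /eqP -> _].
  have [f0 hf0] : exists f0, f0 \in Bs (h tau0) tau'.
    apply/card_gt0P; rewrite lt0n; apply/negP => /eqP H0; apply: Hatt.
    rewrite prE ?hB ?H0 ?mul0r // eA.
    exact: (finrv_meas hV (fun v : {ffun Rr -> Rr'} * {ffun {ffun Rr -> Vv} -> {ffun Rr -> Vv'}} =>
       v.2 tau0 == [ffun r => tau' (v.1 r)])).
  have [r hr] : exists r, f0 r = r'.
    move: hf0; rewrite /Bs !inE => /andP[/andP[_ /forallP /(_ r') /existsP [r /eqP e]] _].
    by exists r.
  have [eB Fpos] := count_conv hf0 hr.
  have Nb0 : (0 < #|bijections Rr Rr'|)%N.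
    by apply/card_gt0P; exists f0; move: hf0; rewrite /Bs inE => /andP[].
  have C0 : (0 < #|Cls tau' r'|)%N by apply/card_gt0P; exists r'; rewrite /Cls inE.
  have := Hpk tau' (ex_intro _ tau0 Hatt) _ _ Hmf r r'.
  rewrite /condpr.
  rewrite (formula HPM Hh Hmf (Q := fun x => (x.1.1.2 r == r') && (x.2 == tau'))
     (S := fun tau f => (f r == r') && (h tau == [ffun z => tau' (f z)]))); last 2 first.
  + by move=> w /=; split => [[-> ->]|/andP[/eqP -> /eqP ->]]; rewrite ?eqxx.
  + by move=> x gx; rewrite (good_T' _ gx).
  rewrite (formula HPM Hh Hmf (Q := fun x => x.2 == tau')
     (S := fun tau f => h tau == [ffun z => tau' (f z)])); last 2 first.
  + by move=> w /=; split => [->|/eqP ->]; rewrite ?eqxx.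
  + by move=> x gx; rewrite (good_T' _ gx).
  rewrite !sum_T0.
  change (#|[set f in bijections Rr Rr' | h tau0 == [ffun z => tau' (f z)]]|) with
    (#|Bs (h tau0) tau'|).
  change (#|[set f in bijections Rr Rr' | (f r == r') && (h tau0 == [ffun z => tau' (f z)])]|) with
    (#|Fs (h tau0) tau' r r'|).
  rewrite eB natrM.
  set F := #|Fs _ _ _ _|; set C := #|Cls _ _|; set N := #|bijections _ _|.
  have FR : (F%:R : R) != 0 by rewrite pnatr_eq0 -lt0n.
  have CR : (C%:R : R) != 0 by rewrite pnatr_eq0 -lt0n.
  have NR : (N%:R : R) != 0 by rewrite pnatr_eq0 -lt0n.
  have -> : (F%:R / N%:R) / (C%:R * F%:R / N%:R) = (C%:R : R)^-1.
    by field; rewrite CR NR FR.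
  by rewrite lef_pV2 ?posrE ?ltr0n // ler_nat.
Qed.
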